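(* Let $\mathcal K$ be a 2-category which admits Eilenberg–Moore constructions for monads and in which idempotent 2-cells split. Let $\varrho:(V,\psi)\Rightarrow(W,\phi)$ be a 2-cell in $\mathrm{EM}^w(\mathcal K)$ between 1-cells $(t,\mu,\eta)\to(t',\mu',\eta')$. For $X\in\{V,W\}$ with structure 2-cell $\chi\in\{\psi,\phi\}$, let $Xv\overset{\pi}{\Rightarrow}\widetilde X\overset{\iota}{\Rightarrow}Xv$ be the chosen splitting of the idempotent $Xv\epsilon\ast\chi v\ast\eta'Xv$, and let $\widetilde\psi:=\pi\ast Vv\epsilon\ast\psi v\ast t'\iota$, $\widetilde\phi:=\pi\ast Wv\epsilon\ast\phi v\ast t'\iota$. Then $\widetilde\varrho:=\pi\ast Wv\epsilon\ast\varrho v\ast\iota:\widetilde V\Rightarrow\widetilde W$ is a 2-cell $(\widetilde V,\widetilde\psi)\Rightarrow(\widetilde W,\widetilde\phi)$ in $\mathrm{EM}(\mathcal K)$, i.e. $\widetilde\varrho\ast\widetilde\psi=\widetilde\phi\ast t'\widetilde\varrho$.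
   Context: Conventions in a 2-category $\mathcal K$: horizontal composition and whiskering by juxtaposition in the order of functor composition; identity 1-cell of $k$ written $k$, identity 2-cell of $V$ written $V$; vertical composition $\ast$ with $\alpha\ast\beta$ meaning $\beta$ then $\alpha$. A monad $(t,\mu,\eta)$ on $k$: $t:k\to k$, $\mu:tt\Rightarrow t$, $\eta:k\Rightarrow t$, associative and unital. $\mathrm{EM}^w(\mathcal K)$: a 1-cell $(t,\mu,\eta)\to(t',\mu',\eta')$ ($t$ on $k$, $t'$ on $k'$) is $(V,\psi)$, $V:k\to k'$, $\psi:t'V\Rightarrow Vt$, with $V\mu\ast\psi t\ast t'\psi=\psi\ast\mu'V$; a 2-cell $(V,\psi)\Rightarrow(W,\phi)$ is $\varrho:V\Rightarrow Wt$ with $W\mu\ast\varrho t\ast\psi=W\mu\ast\phi t\ast t'\varrho$ and $\varrho=W\mu\ast\phi t\ast\eta'Wt\ast\varrho$. In the Lack–Street 2-category $\mathrm{EM}(\mathcal K)$, 1-cells from an identity monad $I(l)$ to $t'$ are pairs $(A,\alpha:t'A\Rightarrow A)$ ($t'$-algebras) and 2-cells $(A,\alpha)\Rightarrow(B,\beta)$ are $\rho:A\Rightarrow B$ with $\beta\ast t'\rho=\rho\ast\alpha$. $\mathcal K$ admits Eilenberg–Moore constructions for monads: the inclusion $I:\mathcal K\to\mathrm{EM}(\mathcal K)$ has a right 2-adjoint $J$; each monad $(t,\mu,\eta)$ on $k$ gives an adjunction $f\dashv v$, $f:k\to J(t)$, $v:J(t)\to k$, unit $\eta$, counit $\epsilon:fv\Rightarrow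 J(t)$, with $t=vf$, $\mu=v\epsilon f$; for $t'$: $f',v',\eta',\epsilon'$. Idempotent 2-cells split (every idempotent $e$ factors as $e=\iota\ast\pi$ with $\pi\ast\iota$ an identity). For a 1-cell $(X,\chi)$ of $\mathrm{EM}^w(\mathcal K)$, $Xv\epsilon\ast\chi v\ast\eta'Xv$ is idempotent, and $(\widetilde X,\widetilde\chi)$ is a $t'$-algebra on $\widetilde X:J(t)\to k'$. *)

(* Defs.v *)
(* Strict 2-categories.
   comp1 g f = "g f" (functor order: first f, then g).
   vcomp a b = "a * b" (first b, then a).
   hcomp a b : (g f) => (g' f') for a : g => g', b : f => f'.
   1-cell equalities are propositional; the strictness axioms for
   horizontal composition are stated up to transport along them. *)
Record TwoCat := {
  Ob : Type;
  Hom : Ob -> Ob -> Type;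
  Cell : forall a b : Ob, Hom a b -> Hom a b -> Type;
  id1 : forall a, Hom a a;
  comp1 : forall a b c, Hom b c -> Hom a b -> Hom a c;
  id2 : forall a b (f : Hom a b), Cell _ _ f f;
  vcomp : forall a b (f g h : Hom a b), Cell _ _ g h -> Cell _ _ f g -> Cell _ _ f h;
  hcomp : forall a b c (g g' : Hom b c) (f f' : Hom a b),
      Cell _ _ g g' -> Cell _ _ f f' -> Cell _ _ (comp1 _ _ _ g f) (comp1 _ _ _ g' f');
  comp1_assoc : forall a b c d (h : Hom c d) (g : Hom b c) (f : Hom a b),
      comp1 _ _ _ h (comp1 _ _ _ g f) = comp1 _ _ _ (comp1 _ _ _ h g) f;
  comp1_idl : forall a b (f : Hom a b), comp1 _ _ _ (id1 b) f = f;
  comp1_idr : forall a b (f : Hom a b), comp1 _ _ _ f (id1 a) = f;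
  vcomp_assoc : forall a b (f g h i : Hom a b)
      (x : Cell _ _ h i) (y : Cell _ _ g h) (z : Cell _ _ f g),
      vcomp _ _ _ _ _ x (vcomp _ _ _ _ _ y z) = vcomp _ _ _ _ _ (vcomp _ _ _ _ _ x y) z;
  vcomp_idl : forall a b (f g : Hom a b) (x : Cell _ _ f g), vcomp _ _ _ _ _ (id2 _ _ g) x = x;
  vcomp_idr : forall a b (f g : Hom a b) (x : Cell _ _ f g), vcomp _ _ _ _ _ x (id2 _ _ f) = x;
  hcomp_id2 : forall a b c (g : Hom b c) (f : Hom a b),
      hcomp _ _ _ _ _ _ _ (id2 _ _ g) (id2 _ _ f) = id2 _ _ (comp1 _ _ _ g f);
  interchange : forall a b c (g g' g'' : Hom b c) (f f' f'' : Hom a b)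
      (x : Cell _ _ g g') (x' : Cell _ _ g' g'') (y : Cell _ _ f f') (y' : Cell _ _ f' f''),
      hcomp _ _ _ _ _ _ _ (vcomp _ _ _ _ _ x' x) (vcomp _ _ _ _ _ y' y)
      = vcomp _ _ _ _ _ (hcomp _ _ _ _ _ _ _ x' y') (hcomp _ _ _ _ _ _ _ x y);
  hcomp_assoc : forall a b c d (h h' : Hom c d) (g g' : Hom b c) (f f' : Hom a b)
      (x : Cell _ _ h h') (y : Cell _ _ g g') (z : Cell _ _ f f'),
      eq_rect _ (fun s => Cell _ _ s (comp1 _ _ _ (comp1 _ _ _ h' g') f'))
        (eq_rect _ (fun s => Cell _ _ (comp1 _ _ _ h (comp1 _ _ _ g f)) s)
           (hcomp _ _ _ _ _ _ _ x (hcomp _ _ _ _ _ _ _ y z)) _ (comp1_assoc _ _ _ _ h' g' f'))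
        _ (comp1_assoc _ _ _ _ h g f)
      = hcomp _ _ _ _ _ _ _ (hcomp _ _ _ _ _ _ _ x y) z;
  hcomp_idl : forall a b (f f' : Hom a b) (y : Cell _ _ f f'),
      eq_rect _ (fun s => Cell _ _ s f')
        (eq_rect _ (fun s => Cell _ _ (comp1 _ _ _ (id1 b) f) s)
           (hcomp _ _ _ _ _ _ _ (id2 _ _ (id1 b)) y) _ (comp1_idl _ _ f'))
        _ (comp1_idl _ _ f) = y;
  hcomp_idr : forall a b (f f' : Hom a b) (y : Cell _ _ f f'),
      eq_rect _ (fun s => Cell _ _ s f')
        (eq_rect _ (fun s => Cell _ _ (comp1 _ _ _ f (id1 a)) s)
           (hcomp _ _ _ _ _ _ _ y (id2 _ _ (id1 a))) _ (comp1_idr _ _ f'))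
        _ (comp1_idr _ _ f) = y
}.

Arguments Cell {t a b}.
Arguments id1 {t}.
Arguments comp1 {t a b c}.
Arguments id2 {t a b}.
Arguments vcomp {t a b f g h}.
Arguments hcomp {t a b c g g' f f'}.
Arguments comp1_assoc {t a b c d}.
Arguments comp1_idl {t a b}.
Arguments comp1_idr {t a b}.

Section TwoCatDefs.
Variable C : TwoCat.

Definition castS {a b} {f f' g : Hom C a b} (e : f = f') (x : Cell f g) : Cell f' g :=
  eq_rect f (fun s => Cell s g) x f' e.
Definition castT {a b} {f g g' : Hom C a b} (e : g = g') (x : Cell f g) : Cell f g' :=
  eq_rect g (fun s => Cell f s) x g' e.

(* whiskering: wl X x = "X x",  wr x X = "x X" *)
Definition wl {a b c} (X : Hom C b c) {f f' : Hom C a b} (x : Cell f f') :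
  Cell (comp1 X f) (comp1 X f') := hcomp (id2 X) x.
Definition wr {a b c} {g g' : Hom C b c} (x : Cell g g') (X : Hom C a b) :
  Cell (comp1 g X) (comp1 g' X) := hcomp x (id2 X).

Record Monad (k : Ob C) := {
  mt : Hom C k k;
  mmu : Cell (comp1 mt mt) mt;
  meta : Cell (id1 k) mt;
  mon_assoc : vcomp mmu (wr mmu mt) = castS (comp1_assoc mt mt mt) (vcomp mmu (wl mt mmu));
  mon_unitl : vcomp mmu (castS (comp1_idl mt) (wr meta mt)) = id2 mt;
  mon_unitr : vcomp mmu (castS (comp1_idr mt) (wl mt meta)) = id2 mt
}.

Arguments mt {k}.
Arguments mmu {k}.
Arguments meta {k}.

Section EM.
Variables (k : Ob C) (T : Monad k).

Definition is_alg {l} (A : Hom C l k) (alpha : Cell (comp1 (mt T) A) A) : Prop :=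
  vcomp alpha (wl (mt T) alpha)
    = vcomp alpha (castS (eq_sym (comp1_assoc (mt T) (mt T) A)) (wr (mmu T) A))
  /\ vcomp alpha (castS (comp1_idl A) (wr (meta T) A)) = id2 A.

Variables (J : Ob C) (f : Hom C k J) (v : Hom C J k) (eps : Cell (comp1 f v) (id1 J))
          (et : comp1 v f = mt T).

Lemma em_e1 : comp1 f (mt T) = comp1 (comp1 f v) f.
Proof. rewrite <- et. apply comp1_assoc. Qed.
Lemma em_e2 : comp1 v (comp1 f v) = comp1 (mt T) v.
Proof. rewrite <- et. apply comp1_assoc. Qed.
Lemma em_e3 : comp1 v (comp1 (id1 J) f) = mt T.
Proof. rewrite comp1_idl. exact et. Qed.
Lemma em_e4 : comp1 v (comp1 (comp1 f v) f) = comp1 (mt T) (mt T).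
Proof. rewrite <- et. rewrite <- (comp1_assoc f v f). apply comp1_assoc. Qed.

(* the action v e : t v => v of the universal algebra (v, v eps) *)
Definition em_act : Cell (comp1 (mt T) v) v :=
  castS em_e2 (castT (comp1_idr v) (wl v eps)).

Definition em_act_at {l} (h : Hom C l J) : Cell (comp1 (mt T) (comp1 v h)) (comp1 v h) :=
  castS (eq_sym (comp1_assoc (mt T) v h)) (wr em_act h).

(* (J, f, v, eps) is the Eilenberg–Moore object of T: f -| v is an adjunction
   with unit eta and counit eps, t = v f, mu = v eps f, and (v, v eps) is the
   universal t-algebra, i.e. K(l, J) -> Alg_t(l) is an isomorphism of categories
   for every l (bijective on 1-cells, bijective on 2-cells). *)
Definition is_EM_object : Prop :=
  vcomp (castT (comp1_idl f) (wr eps f))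
        (castT em_e1 (castS (comp1_idr f) (wl f (meta T)))) = id2 f
  /\ vcomp em_act (castS (comp1_idl v) (wr (meta T) v)) = id2 v
  /\ mmu T = castS em_e4 (castT em_e3 (wl v (wr eps f)))
  /\ (forall l (A : Hom C l k) (alpha : Cell (comp1 (mt T) A) A), @is_alg l A alpha ->
        exists h : Hom C l J,
          (exists e : comp1 v h = A,
              eq_rect _ (fun X => Cell (comp1 (mt T) X) X) (em_act_at h) A e = alpha)
          /\ forall h' : Hom C l J,
               (exists e : comp1 v h' = A,
                  eq_rect _ (fun X => Cell (comp1 (mt T) X) X) (em_act_at h') A e = alpha)
               -> h' = h)
  /\ (forall l (h h' : Hom C l J) (rho : Cell (comp1 v h) (comp1 v h')),
        vcomp (em_act_at h') (wl (mt T) rho) = vcomp rho (em_act_at h) ->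
        exists! sigma : Cell h h', wl v sigma = rho).

End EM.

Definition admits_EM : Prop :=
  forall k (T : Monad k), exists (J : Ob C) (f : Hom C k J) (v : Hom C J k)
    (eps : Cell (comp1 f v) (id1 J)) (et : comp1 v f = mt T),
    is_EM_object k T J f v eps et.

Definition idempotents_split : Prop :=
  forall a b (g : Hom C a b) (e : Cell g g), vcomp e e = e ->
    exists (h : Hom C a b) (p : Cell g h) (i : Cell h g),
      vcomp p i = id2 h /\ vcomp i p = e.

Section EMw.
Variables (k k' : Ob C) (T : Monad k) (T' : Monad k').

Definition EMw_1cell (X : Hom C k k') (chi : Cell (comp1 (mt T') X) (comp1 X (mt T))) : Prop :=
  castS (comp1_assoc (mt T') (mt T') X)
    (vcomp (castS (comp1_assoc X (mt T) (mt T)) (wl X (mmu T)))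
       (vcomp (castS (eq_sym (comp1_assoc (mt T') X (mt T))) (wr chi (mt T)))
          (wl (mt T') chi)))
  = vcomp chi (wr (mmu T') X).

Definition Xmu (X : Hom C k k') : Cell (comp1 (comp1 X (mt T)) (mt T)) (comp1 X (mt T)) :=
  castS (comp1_assoc X (mt T) (mt T)) (wl X (mmu T)).
Definition chit (X : Hom C k k') (chi : Cell (comp1 (mt T') X) (comp1 X (mt T))) :
  Cell (comp1 (mt T') (comp1 X (mt T))) (comp1 (comp1 X (mt T)) (mt T)) :=
  castS (eq_sym (comp1_assoc (mt T') X (mt T))) (wr chi (mt T)).

Definition EMw_2cell (V : Hom C k k') (psi : Cell (comp1 (mt T') V) (comp1 V (mt T)))
    (W : Hom C k k') (phi : Cell (comp1 (mt T') W) (comp1 W (mt T)))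
    (rho : Cell V (comp1 W (mt T))) : Prop :=
  vcomp (Xmu W) (vcomp (wr rho (mt T)) psi)
    = vcomp (Xmu W) (vcomp (chit W phi) (wl (mt T') rho))
  /\ rho = vcomp (Xmu W) (vcomp (chit W phi)
             (vcomp (castS (comp1_idl (comp1 W (mt T))) (wr (meta T') (comp1 W (mt T)))) rho)).

Variables (J : Ob C) (f : Hom C k J) (v : Hom C J k) (eps : Cell (comp1 f v) (id1 J))
          (et : comp1 v f = mt T).

Lemma eq_Xtv (X : Hom C k k') :
  comp1 (comp1 X (mt T)) v = comp1 (comp1 X v) (comp1 f v).
Proof.
  rewrite <- et. rewrite (comp1_assoc X v f). rewrite (comp1_assoc (comp1 X v) f v).
  reflexivity.
Qed.

Definition Xveps (X : Hom C k k') : Cell (comp1 (comp1 X (mt T)) v) (comp1 X v) :=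
  castS (eq_sym (eq_Xtv X)) (castT (comp1_idr (comp1 X v)) (wl (comp1 X v) eps)).

Definition chiv (X : Hom C k k') (chi : Cell (comp1 (mt T') X) (comp1 X (mt T))) :
  Cell (comp1 (mt T') (comp1 X v)) (comp1 (comp1 X (mt T)) v) :=
  castS (eq_sym (comp1_assoc (mt T') X v)) (wr chi v).

Definition EMidem (X : Hom C k k') (chi : Cell (comp1 (mt T') X) (comp1 X (mt T))) :
  Cell (comp1 X v) (comp1 X v) :=
  vcomp (Xveps X) (vcomp (chiv X chi)
    (castS (comp1_idl (comp1 X v)) (wr (meta T') (comp1 X v)))).

Definition tilde_chi (X : Hom C k k') (chi : Cell (comp1 (mt T') X) (comp1 X (mt T)))
    (Xt : Hom C J k') (p : Cell (comp1 X v) Xt) (i : Cell Xt (comp1 X v)) :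
  Cell (comp1 (mt T') Xt) Xt :=
  vcomp p (vcomp (Xveps X) (vcomp (chiv X chi) (wl (mt T') i))).

Definition tilde_rho (V W : Hom C k k') (rho : Cell V (comp1 W (mt T)))
    (Vt Wt : Hom C J k') (iV : Cell Vt (comp1 V v)) (pW : Cell (comp1 W v) Wt) :
  Cell Vt Wt :=
  vcomp pW (vcomp (Xveps W) (vcomp (wr rho v) iV)).

End EMw.

End TwoCatDefs.

Arguments castS {C a b f f' g}.
Arguments castT {C a b f g g'}.
Arguments wl {C a b c} X {f f'}.
Arguments wr {C a b c g g'}.
Arguments Monad {C}.
Arguments mt {C k}.
Arguments mmu {C k}.
Arguments meta {C k}.
Arguments mon_assoc {C k}.
Arguments mon_unitl {C k}.
Arguments mon_unitr {C k}.
Arguments is_alg {C k} T {l}.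
Arguments em_e1 {C k T J f v}.
Arguments em_e2 {C k T J f v}.
Arguments em_e3 {C k T J f v}.
Arguments em_e4 {C k T J f v}.
Arguments em_act {C k T J f v}.
Arguments em_act_at {C k T J f v} eps et {l}.
Arguments is_EM_object {C k T J f v}.
Arguments EMw_1cell {C k k'} T T'.
Arguments Xmu {C k k'} T.
Arguments chit {C k k'} T T' {X}.
Arguments EMw_2cell {C k k'} T T' {V}.
Arguments eq_Xtv {C k k' T J f v}.
Arguments Xveps {C k k' T J f v}.
Arguments chiv {C k k' T T' J v}.
Arguments EMidem {C k k' T} T' {J f v}.
Arguments tilde_chi {C k k' T} T' {J f v} eps et {X} chi {Xt}.
Arguments tilde_rho {C k k' T J f v} eps et {V W} rho {Vt Wt}.

(* Main.v *)
Require Import Defs.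
From Stdlib Require Import Eqdep.

Definition PC (C : TwoCat) a b := {f : Hom C a b & {g : Hom C a b & @Cell C a b f g}}.
Definition pk {C a b} {f g : Hom C a b} (x : Cell f g) : PC C a b :=
  existT _ f (existT _ g x).

Lemma pk_castS {C a b} {f f' g : Hom C a b} (e : f = f') (x : Cell f g) :
  pk (castS e x) = pk x.
Proof. destruct e; reflexivity. Qed.
Lemma pk_castT {C a b} {f g g' : Hom C a b} (e : g = g') (x : Cell f g) :
  pk (castT e x) = pk x.
Proof. destruct e; reflexivity. Qed.
Lemma pk_eq {C a b} {f g : Hom C a b} (x y : Cell f g) : pk x = pk y -> x = y.
Proof. unfold pk; intro H. apply inj_pair2 in H. apply inj_pair2 in H. exact H. Qed.

Lemma vc_cong {C a b} {f g h f' g' h' : Hom C a b} (x : Cell g h) (x' : Cell g' h')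
  (y : Cell f g) (y' : Cell f' g') :
  pk x = pk x' -> pk y = pk y' -> pk (vcomp x y) = pk (vcomp x' y').
Proof.
  intros H1 H2.
  assert (E1 : g = g') by exact (f_equal (@projT1 _ _) H1). subst g'.
  assert (E2 : h = h') by exact (f_equal (fun p => projT1 (projT2 p)) H1). subst h'.
  assert (E3 : f = f') by exact (f_equal (@projT1 _ _) H2). subst f'.
  apply pk_eq in H1. apply pk_eq in H2. subst. reflexivity.
Qed.

Lemma hc_cong {C a b c} {g g' : Hom C b c} {f f' : Hom C a b}
  {g2 g2' : Hom C b c} {f2 f2' : Hom C a b}
  (x : Cell g g') (x' : Cell g2 g2') (y : Cell f f') (y' : Cell f2 f2') :
  pk x = pk x' -> pk y = pk y' -> pk (hcomp x y) = pk (hcomp x' y').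
Proof.
  intros H1 H2.
  assert (E1 : g = g2) by exact (f_equal (@projT1 _ _) H1). subst g2.
  assert (E2 : g' = g2') by exact (f_equal (fun p => projT1 (projT2 p)) H1). subst g2'.
  assert (E3 : f = f2) by exact (f_equal (@projT1 _ _) H2). subst f2.
  assert (E4 : f' = f2') by exact (f_equal (fun p => projT1 (projT2 p)) H2). subst f2'.
  apply pk_eq in H1. apply pk_eq in H2. subst. reflexivity.
Qed.

Lemma h_assoc {C a b c d} {h h' : Hom C c d} {g g' : Hom C b c} {f f' : Hom C a b}
  (x : Cell h h') (y : Cell g g') (z : Cell f f') :
  pk (hcomp x (hcomp y z)) = pk (hcomp (hcomp x y) z).
Proof.
  rewrite <- (hcomp_assoc C). 
  symmetry; exact (eq_trans (pk_castS (comp1_assoc h g f) _) (pk_castT (comp1_assoc h' g' f') _)).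
Qed.

Lemma h_idl {C a b} {f f' : Hom C a b} (y : Cell f f') :
  pk (hcomp (id2 (id1 b)) y) = pk y.
Proof.
  etransitivity; [| apply (f_equal pk (hcomp_idl C _ _ _ _ y))].
  symmetry; exact (eq_trans (pk_castS (comp1_idl f) _) (pk_castT (comp1_idl f') _)).
Qed.
Lemma h_idr {C a b} {f f' : Hom C a b} (y : Cell f f') :
  pk (hcomp y (id2 (id1 a))) = pk y.
Proof.
  etransitivity; [| apply (f_equal pk (hcomp_idr C _ _ _ _ y))].
  symmetry; exact (eq_trans (pk_castS (comp1_idr f) _) (pk_castT (comp1_idr f') _)).
Qed.
Lemma pk_id {C a b} {f f' : Hom C a b} : f = f' -> pk (id2 f) = pk (id2 f').
Proof. intros ->; reflexivity. Qed.

Lemma wl_vcomp {C a b c} (X : Hom C b c) {f g h : Hom C a b} (x : Cell g h) (y : Cell f g) :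
  wl X (vcomp x y) = vcomp (wl X x) (wl X y).
Proof. unfold wl. rewrite <- interchange, vcomp_idl. reflexivity. Qed.
Lemma wr_vcomp {C a b c} {f g h : Hom C b c} (x : Cell g h) (y : Cell f g) (X : Hom C a b) :
  wr (vcomp x y) X = vcomp (wr x X) (wr y X).
Proof. unfold wr. rewrite <- interchange, vcomp_idl. reflexivity. Qed.

Lemma eta_nat {C a b} (M : Monad b) (g h : Hom C a b) (x : Cell g h) :
  vcomp (castS (comp1_idl h) (wr (meta M) h)) x
  = vcomp (wl (mt M) x) (castS (comp1_idl g) (wr (meta M) g)).
Proof.
  apply pk_eq.
  transitivity (pk (hcomp (meta M) x)).
  - transitivity (pk (vcomp (hcomp (meta M) (id2 h)) (hcomp (id2 (id1 b)) x))).
    + apply vc_cong. apply pk_castS. symmetry; apply h_idl.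
    + rewrite <- interchange, vcomp_idl, vcomp_idr. reflexivity.
  - transitivity (pk (vcomp (hcomp (id2 (mt M)) x) (hcomp (meta M) (id2 g)))).
    + rewrite <- interchange, vcomp_idl, vcomp_idr. reflexivity.
    + apply vc_cong. reflexivity. symmetry; apply pk_castS.
Qed.

Definition vE {C k J} {f : Hom C k J} {v : Hom C J k} (eps : Cell (comp1 f v) (id1 J)) :
  Cell (comp1 v (comp1 f v)) v := castT (comp1_idr v) (wl v eps).

Lemma XE {C k k' J} {T : Monad k} {f : Hom C k J} {v : Hom C J k}
  (eps : Cell (comp1 f v) (id1 J)) (et : comp1 v f = mt T) (X : Hom C k k') :
  pk (Xveps eps et X) = pk (hcomp (id2 X) (vE eps)).
Proof.
  unfold Xveps. rewrite pk_castS, pk_castT.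
  transitivity (pk (hcomp (id2 X) (hcomp (id2 v) eps))).
  - unfold wl. rewrite h_assoc, hcomp_id2. reflexivity.
  - apply hc_cong; [reflexivity | symmetry; apply pk_castT].
Qed.

Lemma Mu1 {C k J} {f : Hom C k J} {v : Hom C J k} (eps : Cell (comp1 f v) (id1 J)) :
  vcomp eps (castT (comp1_idr (comp1 f v)) (hcomp (id2 (comp1 f v)) eps))
  = vcomp eps (castT (comp1_idl (comp1 f v)) (hcomp eps (id2 (comp1 f v)))).
Proof.
  apply pk_eq. transitivity (pk (hcomp eps eps)).
  - transitivity (pk (vcomp (hcomp eps (id2 (id1 J))) (hcomp (id2 (comp1 f v)) eps))).
    + apply vc_cong. symmetry; apply h_idr. apply pk_castT.
    + rewrite <- interchange, vcomp_idl, vcomp_idr. reflexivity.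
  - transitivity (pk (vcomp (hcomp (id2 (id1 J)) eps) (hcomp eps (id2 (comp1 f v))))).
    + rewrite <- interchange, vcomp_idl, vcomp_idr. reflexivity.
    + apply vc_cong. apply h_idl. symmetry; apply pk_castT.
Qed.

Lemma tv_eq {C k J} {T : Monad k} {f : Hom C k J} {v : Hom C J k} (et : comp1 v f = mt T) :
  comp1 (mt T) v = comp1 v (comp1 f v).
Proof. rewrite <- et. symmetry; apply comp1_assoc. Qed.

Lemma Mu0 {C k J} {T : Monad k} {f : Hom C k J} {v : Hom C J k}
  (eps : Cell (comp1 f v) (id1 J)) (et : comp1 v f = mt T) (HJ : is_EM_object eps et) :
  pk (vcomp (vE eps) (castT (tv_eq et) (hcomp (id2 (mt T)) (vE eps))))
  = pk (vcomp (vE eps) (castT (tv_eq et) (hcomp (mmu T) (id2 v)))).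
Proof.
  destruct HJ as (_ & _ & Hmu & _).
  transitivity (pk (wl v (vcomp eps (castT (comp1_idr (comp1 f v)) (hcomp (id2 (comp1 f v)) eps))))).
  { rewrite wl_vcomp. apply vc_cong. apply pk_castT. rewrite pk_castT. unfold wl.
    transitivity (pk (hcomp (id2 v) (hcomp (id2 (comp1 f v)) eps))).
    2: { apply hc_cong. reflexivity. symmetry; apply pk_castT. }
    transitivity (pk (hcomp (id2 (comp1 v f)) (hcomp (id2 v) eps))).
    { apply hc_cong. apply pk_id. symmetry; exact et. apply pk_castT. }
    rewrite <- (hcomp_id2 C _ _ _ v f), <- h_assoc.
    apply hc_cong. reflexivity. rewrite h_assoc, hcomp_id2. reflexivity. }
  rewrite Mu1. symmetry.
  rewrite wl_vcomp. apply vc_cong. apply pk_castT. rewrite pk_castT. unfold wl.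
  transitivity (pk (hcomp (hcomp (id2 v) (hcomp eps (id2 f))) (id2 v))).
  { apply hc_cong; [|reflexivity]. rewrite Hmu, pk_castS, pk_castT. reflexivity. }
  rewrite <- h_assoc. apply hc_cong. reflexivity.
  rewrite pk_castT, <- h_assoc, hcomp_id2. reflexivity.
Qed.

Lemma Mu {C k k' J} {T : Monad k} {f : Hom C k J} {v : Hom C J k}
  (eps : Cell (comp1 f v) (id1 J)) (et : comp1 v f = mt T) (HJ : is_EM_object eps et)
  (X : Hom C k k') :
  vcomp (Xveps eps et X) (Xveps eps et (comp1 X (mt T)))
  = vcomp (Xveps eps et X) (wr (Xmu T X) v).
Proof.
  apply pk_eq.
  transitivity (pk (wl X (vcomp (vE eps) (castT (tv_eq et) (hcomp (id2 (mt T)) (vE eps)))))).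
  { rewrite wl_vcomp. apply vc_cong. apply XE. rewrite XE. unfold wl.
    transitivity (pk (hcomp (id2 X) (hcomp (id2 (mt T)) (vE eps)))).
    - rewrite h_assoc, hcomp_id2. reflexivity.
    - apply hc_cong; [reflexivity| symmetry; apply pk_castT]. }
  transitivity (pk (wl X (vcomp (vE eps) (castT (tv_eq et) (hcomp (mmu T) (id2 v)))))).
  { apply hc_cong; [reflexivity| apply Mu0; exact HJ]. }
  rewrite wl_vcomp. apply vc_cong. symmetry; apply XE.
  unfold Xmu, wr, wl.
  transitivity (pk (hcomp (id2 X) (hcomp (mmu T) (id2 v)))).
  - apply hc_cong; [reflexivity| apply pk_castT].
  - rewrite h_assoc. apply hc_cong; [symmetry; apply pk_castS| reflexivity].
Qed.

Lemma chi_eps {C k k' J} {T : Monad k} {T' : Monad k'} {f : Hom C k J} {v : Hom C J k}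
  (eps : Cell (comp1 f v) (id1 J)) (et : comp1 v f = mt T)
  (X : Hom C k k') (chi : Cell (comp1 (mt T') X) (comp1 X (mt T))) :
  vcomp (chiv X chi) (wl (mt T') (Xveps eps et X))
  = vcomp (Xveps eps et (comp1 X (mt T))) (chiv (comp1 X (mt T)) (chit T T' chi)).
Proof.
  apply pk_eq. transitivity (pk (hcomp chi (vE eps))).
  - transitivity (pk (vcomp (hcomp chi (id2 v)) (hcomp (id2 (comp1 (mt T') X)) (vE eps)))).
    + apply vc_cong. unfold chiv. apply pk_castS.
      unfold wl. transitivity (pk (hcomp (id2 (mt T')) (hcomp (id2 X) (vE eps)))).
      * apply hc_cong; [reflexivity| apply XE].
      * rewrite h_assoc, hcomp_id2. reflexivity.
    + rewrite <- interchange, vcomp_idl, vcomp_idr. reflexivity.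
  - transitivity (pk (vcomp (hcomp (id2 (comp1 X (mt T))) (vE eps)) (hcomp chi (id2 (comp1 v (comp1 f v)))))).
    + rewrite <- interchange, vcomp_idl, vcomp_idr. reflexivity.
    + apply vc_cong. symmetry; apply XE.
      unfold chiv, chit, wr. rewrite pk_castS. symmetry.
      transitivity (pk (hcomp (hcomp chi (id2 (mt T))) (id2 v))).
      * apply hc_cong; [apply pk_castS| reflexivity].
      * rewrite <- h_assoc, hcomp_id2. apply hc_cong. reflexivity. apply pk_id. exact (tv_eq et).
Qed.

Lemma nat_eps {C k k' J} {T : Monad k} {f : Hom C k J} {v : Hom C J k}
  (eps : Cell (comp1 f v) (id1 J)) (et : comp1 v f = mt T)
  (X Y : Hom C k k') (x : Cell X Y) :
  vcomp (wr x v) (Xveps eps et X) = vcomp (Xveps eps et Y) (wr (wr x (mt T)) v).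
Proof.
  apply pk_eq. transitivity (pk (hcomp x (vE eps))).
  - transitivity (pk (vcomp (hcomp x (id2 v)) (hcomp (id2 X) (vE eps)))).
    + apply vc_cong. reflexivity. apply XE.
    + rewrite <- interchange, vcomp_idl, vcomp_idr. reflexivity.
  - transitivity (pk (vcomp (hcomp (id2 Y) (vE eps)) (hcomp x (id2 (comp1 v (comp1 f v)))))).
    + rewrite <- interchange, vcomp_idl, vcomp_idr. reflexivity.
    + apply vc_cong. symmetry; apply XE.
      unfold wr. rewrite <- h_assoc, hcomp_id2. apply hc_cong. reflexivity.
      apply pk_id. symmetry. exact (tv_eq et).
Qed.

Lemma chi_chi {C k k' J} {T : Monad k} {T' : Monad k'} {v : Hom C J k}
  (X : Hom C k k') (chi : Cell (comp1 (mt T') X) (comp1 X (mt T))) :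
  pk (vcomp (@chiv C k k' T T' J v (comp1 X (mt T)) (chit T T' chi)) (wl (mt T') (chiv X chi)))
  = pk (wr (vcomp (chit T T' chi) (wl (mt T') chi)) v).
Proof.
  rewrite wr_vcomp. apply vc_cong. unfold chiv; apply pk_castS.
  unfold chiv, wl, wr. transitivity (pk (hcomp (id2 (mt T')) (hcomp chi (id2 v)))).
  - apply hc_cong; [reflexivity| apply pk_castS].
  - apply h_assoc.
Qed.

Definition actX {C k k' J} {T : Monad k} {T' : Monad k'} {f : Hom C k J} {v : Hom C J k}
  (eps : Cell (comp1 f v) (id1 J)) (et : comp1 v f = mt T)
  (X : Hom C k k') (chi : Cell (comp1 (mt T') X) (comp1 X (mt T))) :
  Cell (comp1 (mt T') (comp1 X v)) (comp1 X v) :=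
  vcomp (Xveps eps et X) (chiv X chi).

Definition mX {C k' J} (T' : Monad k') (Y : Hom C J k') :
  Cell (comp1 (mt T') (comp1 (mt T') Y)) (comp1 (mt T') Y) :=
  castS (eq_sym (comp1_assoc (mt T') (mt T') Y)) (wr (mmu T') Y).

Lemma Ass {C k k' J} {T : Monad k} {T' : Monad k'} {f : Hom C k J} {v : Hom C J k}
  (eps : Cell (comp1 f v) (id1 J)) (et : comp1 v f = mt T) (HJ : is_EM_object eps et)
  (X : Hom C k k') (chi : Cell (comp1 (mt T') X) (comp1 X (mt T)))
  (Hchi : EMw_1cell T T' X chi) :
  vcomp (actX eps et X chi) (wl (mt T') (actX eps et X chi))
  = vcomp (actX eps et X chi) (mX T' (comp1 X v)).
Proof.
  unfold actX. rewrite wl_vcomp.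
  rewrite <- (vcomp_assoc _ _ _ _ _ _ _ (Xveps eps et X) (chiv X chi)).
  rewrite (vcomp_assoc _ _ _ _ _ _ _ (chiv X chi)).
  rewrite chi_eps.
  rewrite <- (vcomp_assoc _ _ _ _ _ _ _ (Xveps eps et (comp1 X (mt T)))).
  rewrite (vcomp_assoc _ _ _ _ _ _ _ (Xveps eps et X) (Xveps eps et (comp1 X (mt T)))).
  rewrite (Mu eps et HJ).
  rewrite <- (vcomp_assoc _ _ _ _ _ _ _ (Xveps eps et X) (wr (Xmu T X) v)).
  apply pk_eq.
  rewrite <- (vcomp_assoc _ _ _ _ _ _ _ (Xveps eps et X) (chiv X chi)).
  apply vc_cong; [reflexivity|].
  transitivity (pk (vcomp (wr (Xmu T X) v) (wr (vcomp (chit T T' chi) (wl (mt T') chi)) v))).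
  { apply vc_cong; [reflexivity| apply chi_chi]. }
  rewrite <- wr_vcomp.
  transitivity (pk (wr (vcomp chi (wr (mmu T') X)) v)).
  { apply hc_cong; [|reflexivity]. rewrite <- Hchi. rewrite pk_castS. reflexivity. }
  rewrite wr_vcomp. apply vc_cong. unfold chiv; symmetry; apply pk_castS.
  unfold mX; rewrite pk_castS. unfold wr. rewrite <- h_assoc, hcomp_id2. reflexivity.
Qed.

Lemma U {C k' J} (T' : Monad k') (Y : Hom C J k') :
  vcomp (mX T' Y) (castS (comp1_idl _) (wr (meta T') (comp1 (mt T') Y))) = id2 _.
Proof.
  apply pk_eq.
  transitivity (pk (hcomp (vcomp (mmu T') (castS (comp1_idl (mt T')) (wr (meta T') (mt T'))))
                          (vcomp (id2 Y) (id2 Y)))).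
  2: { rewrite (mon_unitl T'), vcomp_idl, hcomp_id2. reflexivity. }
  rewrite interchange. apply vc_cong. unfold mX; apply pk_castS. rewrite pk_castS. unfold wr.
  transitivity (pk (hcomp (hcomp (meta T') (id2 (mt T'))) (id2 Y))).
  - rewrite <- h_assoc, hcomp_id2; reflexivity.
  - apply hc_cong; [symmetry; apply pk_castS| reflexivity].
Qed.

Lemma U2 {C k' J} (T' : Monad k') (Y : Hom C J k') :
  vcomp (mX T' Y) (wl (mt T') (castS (comp1_idl Y) (wr (meta T') Y))) = id2 _.
Proof.
  apply pk_eq.
  transitivity (pk (hcomp (vcomp (mmu T') (castS (comp1_idr (mt T')) (wl (mt T') (meta T'))))
                          (vcomp (id2 Y) (id2 Y)))).
  2: { rewrite (mon_unitr T'), vcomp_idl, hcomp_id2. reflexivity. }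
  rewrite interchange. apply vc_cong. unfold mX; apply pk_castS. unfold wl, wr.
  transitivity (pk (hcomp (id2 (mt T')) (hcomp (meta T') (id2 Y)))).
  - apply hc_cong; [reflexivity| apply pk_castS].
  - rewrite h_assoc. apply hc_cong; [symmetry; apply pk_castS| reflexivity].
Qed.

Lemma EM_eq {C k k' J} {T : Monad k} {T' : Monad k'} {f : Hom C k J} {v : Hom C J k}
  (eps : Cell (comp1 f v) (id1 J)) (et : comp1 v f = mt T)
  (X : Hom C k k') (chi : Cell (comp1 (mt T') X) (comp1 X (mt T))) :
  EMidem T' eps et X chi = vcomp (actX eps et X chi) (castS (comp1_idl _) (wr (meta T') (comp1 X v))).
Proof. unfold EMidem, actX. rewrite vcomp_assoc. reflexivity. Qed.

Lemma EA {C k k' J} {T : Monad k} {T' : Monad k'} {f : Hom C k J} {v : Hom C J k}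
  (eps : Cell (comp1 f v) (id1 J)) (et : comp1 v f = mt T) (HJ : is_EM_object eps et)
  (X : Hom C k k') (chi : Cell (comp1 (mt T') X) (comp1 X (mt T)))
  (Hchi : EMw_1cell T T' X chi) :
  vcomp (EMidem T' eps et X chi) (actX eps et X chi) = actX eps et X chi.
Proof.
  rewrite EM_eq, <- vcomp_assoc, eta_nat, vcomp_assoc, (Ass eps et HJ X chi Hchi).
  rewrite <- vcomp_assoc, U, vcomp_idr. reflexivity.
Qed.

Lemma AE {C k k' J} {T : Monad k} {T' : Monad k'} {f : Hom C k J} {v : Hom C J k}
  (eps : Cell (comp1 f v) (id1 J)) (et : comp1 v f = mt T) (HJ : is_EM_object eps et)
  (X : Hom C k k') (chi : Cell (comp1 (mt T') X) (comp1 X (mt T)))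
  (Hchi : EMw_1cell T T' X chi) :
  vcomp (actX eps et X chi) (wl (mt T') (EMidem T' eps et X chi)) = actX eps et X chi.
Proof.
  rewrite EM_eq, wl_vcomp, vcomp_assoc, (Ass eps et HJ X chi Hchi).
  rewrite <- vcomp_assoc, U2, vcomp_idr. reflexivity.
Qed.

Lemma Bfact {C k k' J} {T : Monad k} {T' : Monad k'} {f : Hom C k J} {v : Hom C J k}
  (eps : Cell (comp1 f v) (id1 J)) (et : comp1 v f = mt T) (HJ : is_EM_object eps et)
  (V W : Hom C k k')
  (psi : Cell (comp1 (mt T') V) (comp1 V (mt T)))
  (phi : Cell (comp1 (mt T') W) (comp1 W (mt T)))
  (rho : Cell V (comp1 W (mt T))) (Hrho : EMw_2cell T T' psi W phi rho) :
  vcomp (vcomp (Xveps eps et W) (wr rho v)) (actX eps et V psi)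
  = vcomp (actX eps et W phi) (wl (mt T') (vcomp (Xveps eps et W) (wr rho v))).
Proof.
  unfold actX.
  transitivity (vcomp (Xveps eps et W) (vcomp (vcomp (wr rho v) (Xveps eps et V)) (chiv V psi))).
  { rewrite !vcomp_assoc. reflexivity. }
  rewrite nat_eps.
  transitivity (vcomp (vcomp (Xveps eps et W) (Xveps eps et (comp1 W (mt T))))
                  (vcomp (wr (wr rho (mt T)) v) (chiv V psi))).
  { rewrite !vcomp_assoc. reflexivity. }
  rewrite (Mu eps et HJ).
  symmetry.
  rewrite wl_vcomp.
  transitivity (vcomp (Xveps eps et W) (vcomp (vcomp (chiv W phi) (wl (mt T') (Xveps eps et W)))
                                            (wl (mt T') (wr rho v)))).
  { rewrite !vcomp_assoc. reflexivity. }
  rewrite chi_eps.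
  transitivity (vcomp (vcomp (Xveps eps et W) (Xveps eps et (comp1 W (mt T))))
                  (vcomp (chiv (comp1 W (mt T)) (chit T T' phi)) (wl (mt T') (wr rho v)))).
  { rewrite !vcomp_assoc. reflexivity. }
  rewrite (Mu eps et HJ).
  rewrite <- !vcomp_assoc. apply pk_eq. apply vc_cong; [reflexivity|].
  symmetry.
  transitivity (pk (wr (vcomp (Xmu T W) (vcomp (wr rho (mt T)) psi)) v)).
  { rewrite !wr_vcomp. apply vc_cong; [reflexivity|]. apply vc_cong; [reflexivity| unfold chiv; apply pk_castS]. }
  rewrite (proj1 Hrho). rewrite !wr_vcomp. apply vc_cong; [reflexivity|].
  apply vc_cong; [unfold chiv; symmetry; apply pk_castS|].
  unfold wl, wr. symmetry; apply h_assoc.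
Qed.

Theorem lemma3p4 (C : TwoCat) (HEM : admits_EM C) (Hsplit : idempotents_split C)
  (k k' : Ob C) (T : Monad k) (T' : Monad k')
  (J : Ob C) (f : Hom C k J) (v : Hom C J k) (eps : Cell (comp1 f v) (id1 J))
  (et : comp1 v f = mt T) (HJ : is_EM_object eps et)
  (V W : Hom C k k')
  (psi : Cell (comp1 (mt T') V) (comp1 V (mt T)))
  (phi : Cell (comp1 (mt T') W) (comp1 W (mt T)))
  (Hpsi : EMw_1cell T T' V psi) (Hphi : EMw_1cell T T' W phi)
  (rho : Cell V (comp1 W (mt T))) (Hrho : EMw_2cell T T' psi W phi rho)
  (Vt : Hom C J k') (pV : Cell (comp1 V v) Vt) (iV : Cell Vt (comp1 V v))
  (HpiV : vcomp pV iV = id2 Vt) (HipV : vcomp iV pV = EMidem T' eps et V psi)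
  (Wt : Hom C J k') (pW : Cell (comp1 W v) Wt) (iW : Cell Wt (comp1 W v))
  (HpiW : vcomp pW iW = id2 Wt) (HipW : vcomp iW pW = EMidem T' eps et W phi) :
  vcomp (tilde_rho eps et rho iV pW) (tilde_chi T' eps et psi pV iV)
  = vcomp (tilde_chi T' eps et phi pW iW) (wl (mt T') (tilde_rho eps et rho iV pW)).
Proof.
  unfold tilde_rho, tilde_chi.
  transitivity (vcomp pW (vcomp (vcomp (vcomp (Xveps eps et W) (wr rho v))
       (vcomp (vcomp iV pV) (actX eps et V psi))) (wl (mt T') iV))).
  { unfold actX. rewrite !vcomp_assoc. reflexivity. }
  rewrite HipV, (EA eps et HJ V psi Hpsi), (Bfact eps et HJ V W psi phi rho Hrho).
  symmetry.
  transitivity (vcomp pW (vcomp (vcomp (vcomp (actX eps et W phi) (wl (mt T') (vcomp iW pW)))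
       (wl (mt T') (vcomp (Xveps eps et W) (wr rho v)))) (wl (mt T') iV))).
  { rewrite !wl_vcomp. unfold actX. rewrite !vcomp_assoc. reflexivity. }
  rewrite HipW, (AE eps et HJ W phi Hphi). rewrite !vcomp_assoc. reflexivity.
Qed.
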